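(* Let $\mathbf x,\mathbf y\in\mathbb R^\infty$ be such that the functions $t\mapsto\|\mathbf x\|_t$ and $t\mapsto\|\mathbf y\|_t$ on $(0,\infty)$ are not identical. Then the set $\{t\in(0,\infty):\|\mathbf x\|_t=\|\mathbf y\|_t\}$ is finite. Consequently, for any finite set $\mathcal X\subseteq\mathbb R^\infty$, the set of points $s\in(0,\infty)$ for which there exist $\mathbf x,\mathbf y\in\mathcal X$ with $\|\mathbf x\|_s=\|\mathbf y\|_s$ but $t\mapsto\|\mathbf x\|_t$ not identical to $t\mapsto\|\mathbf y\|_t$ is finite.
   Context: $\mathbb R^\infty$ is the set of real sequences with only finitely many nonzero entries, and $\|\mathbf x\|_t=(\sum_n|x_n|^t)^{1/t}$ for $t\in(0,\infty)$. *)

(* Defs.v *)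
From Stdlib Require Import Reals List.
Open Scope R_scope.

(* Real power a^t for a >= 0 and t > 0, with the convention 0^t = 0
   (Stdlib's Rpower 0 t = exp (t * ln 0) = 1, which is wrong for us). *)
Definition rpow (a t : R) : R := if Req_EM_T a 0 then 0 else Rpower a t.

(* An element of R^infty (real sequence with finitely many nonzero entries)
   is represented by the finite list of its first entries; all later
   entries are 0. *)
Definition Rinf := list R.

Definition pnorm (x : Rinf) (t : R) : R :=
  rpow (fold_right Rplus 0 (map (fun a => rpow (Rabs a) t) x)) (/ t).

Definition finite_set (P : R -> Prop) : Prop :=
  exists l : list R, forall t, P t -> In t l.

(* Main.v *)
Require Import Defs.
From Coquelicot Require Import Coquelicot.
From Stdlib Require Import Reals List Lra Lia Classical.
Open Scope R_scope.

Definition F (l : list (R*R)) (t : R) : R :=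
  fold_right (fun p acc => fst p * exp (snd p * t) + acc) 0 l.
Definition D (l : list (R*R)) := map (fun p => (fst p * snd p, snd p)) l.
Definition shift (l : list (R*R)) r := map (fun p => (fst p, snd p - r)) l.

Lemma F_derive l t : derivable_pt_lim (F l) t (F (D l) t).
Proof.
  induction l as [|[c r] l IH]; simpl.
  - apply (derivable_pt_lim_const 0).
  - apply derivable_pt_lim_plus; [|exact IH].
    apply is_derive_Reals.
    auto_derive; auto. simpl. ring.
Qed.

Lemma F_cont l t : continuity_pt (F l) t.
Proof.
  apply derivable_continuous_pt. exists (F (D l) t). apply F_derive.
Qed.

Lemma F_shift l r t : F (shift l r) t = exp (- r * t) * F l t.
Proof.
  induction l as [|[c s] l IH]; simpl. ring.
  rewrite IH. replace ((s - r) * t) with (s * t + (- r * t)) by ring.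
  rewrite exp_plus. ring.
Qed.

Fixpoint inc (l : list R) : Prop :=
  match l with
  | a :: ((b :: _) as l') => a < b /\ inc l'
  | _ => True
  end.

Lemma rolle_list (f f' : R -> R) :
  (forall t, derivable_pt_lim f t (f' t)) ->
  forall z a, inc (a :: z) -> f a = 0 -> Forall (fun t => f t = 0) z ->
  exists s, length s = length z /\ inc s /\ Forall (fun t => f' t = 0) s
     /\ Forall (fun x => a < x) s.
Proof.
  intros Hd. induction z as [|b z IH]; intros a Hi Ha Hz.
  - exists nil. simpl. repeat split; constructor.
  - destruct Hi as [Hab Hi]. inversion Hz; subst.
    destruct (IH b Hi H1 H2) as [s [Hl [Hs [Hz' Hb]]]].
    assert (pr : forall x, a < x < b -> derivable_pt f x).
    { intros x _. exists (f' x). apply Hd. }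
    destruct (Rolle f a b pr) as [c [P Hc]].
    { intros x _. apply derivable_continuous_pt. exists (f' x). apply Hd. }
    exact Hab. congruence.
    rewrite (derive_pt_eq_0 f c (f' c) (pr c P) (Hd c)) in Hc.
    exists (c :: s). simpl. repeat split.
    + congruence.
    + destruct s as [|d s]; auto. split; auto. inversion Hb; lra.
    + constructor; auto.
    + constructor. lra. eapply Forall_impl; [|exact Hb]. simpl; intros; lra.
Qed.

Lemma deriv0_const (f f' : R -> R) :
  (forall t, derivable_pt_lim f t (f' t)) -> (forall t, f' t = 0) ->
  forall a b, f a = f b.
Proof.
  intros Hd H0 a b.
  destruct (MVT_gen f a b f') as [c [_ Hc]].
  - intros x _. apply is_derive_Reals. apply Hd.
  - intros x _. apply derivable_continuous_pt. exists (f' x). apply Hd.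
  - rewrite H0 in Hc. lra.
Qed.

Lemma length_D l : length (D l) = length l.
Proof. apply length_map. Qed.
Lemma length_shift l r : length (shift l r) = length l.
Proof. apply length_map. Qed.

Lemma main_zero_n : forall n l z, (length l <= n)%nat -> inc z -> (length l < length z)%nat ->
  Forall (fun t => F l t = 0) z -> forall t, F l t = 0.
Proof.
  induction n as [|n IH]; intros [|[c r] l] z Hn Hi Hlen Hz t; try reflexivity.
  - simpl in Hn; lia.
  - set (h := (c, 0) :: shift l r).
    assert (Hh : forall u, F h u = exp (- r * u) * F ((c, r) :: l) u).
    { intro u. unfold h. simpl. rewrite F_shift. simpl.
      replace (0 * u) with 0 by ring. rewrite exp_0.
      replace ((r) * u) with (- (- r * u)) by ring. rewrite exp_Ropp.
      field. apply Rgt_not_eq, exp_pos. }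
    assert (HD : forall u, F (D h) u = F (D (shift l r)) u).
    { intro u. simpl. ring. }
    destruct z as [|a z]; [simpl in Hlen; lia|].
    inversion Hz; subst.
    assert (Hzh : Forall (fun t => F h t = 0) z).
    { eapply Forall_impl; [|exact H2]. intros u Hu. rewrite Hh.
      rewrite Hu. ring. }
    assert (Hd : forall u, derivable_pt_lim (F h) u (F (D (shift l r)) u)).
    { intro u. rewrite <- HD. apply F_derive. }
    destruct (rolle_list _ _ Hd z a Hi) as [s [Hl [Hs [Hs0 _]]]].
    { rewrite Hh. cbv beta in H1. rewrite H1. ring. }
    exact Hzh.
    assert (H0 : forall u, F (D (shift l r)) u = 0).
    { apply (IH _ s). rewrite length_D, length_shift. simpl in Hn; lia.
      exact Hs. rewrite length_D, length_shift, Hl. simpl in Hlen; lia. exact Hs0. }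
    assert (Hc : F h t = F h a) by (apply (deriv0_const _ _ Hd H0)).
    assert (Ha : F h a = 0) by (rewrite Hh; cbv beta in H1; rewrite H1; ring).
    rewrite Hh, Ha in Hc.
    apply (Rmult_eq_reg_l (exp (- r * t))). rewrite Hc; ring.
    apply Rgt_not_eq, exp_pos.
Qed.

Lemma main_zero l z : inc z -> (length l < length z)%nat ->
  Forall (fun t => F l t = 0) z -> forall t, F l t = 0.
Proof. intros. eapply main_zero_n; eauto. Qed.

Fixpoint ins (x : R) (l : list R) : list R :=
  match l with
  | nil => x :: nil
  | a :: l' => if Rlt_dec x a then x :: a :: l' else a :: ins x l'
  end.

Lemma ins_inc_gen : forall l x, inc l -> ~ In x l ->
  inc (ins x l) /\ (forall a, inc (a :: l) -> a < x -> inc (a :: ins x l)).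
Proof.
  induction l as [|b l IH]; intros x Hi Hn.
  - simpl. split; auto.
  - simpl ins. destruct (Rlt_dec x b) as [Hxb|Hxb].
    + split.
      * change (x < b /\ inc (b :: l)). auto.
      * intros a Ha Hax. change (a < x /\ (x < b /\ inc (b :: l))). auto.
    + assert (Hbx : b < x).
      { destruct (Rtotal_order b x) as [H|[H|H]]; auto.
        - subst. exfalso. apply Hn. left; auto.
        - exfalso. auto. }
      assert (Hnl : ~ In x l) by (intro; apply Hn; right; auto).
      assert (Hil : inc l) by (destruct l; simpl in *; tauto).
      destruct (IH x Hil Hnl) as [_ H2].
      split.
      * apply H2; auto.
      * intros a Ha Hax. change (a < b /\ inc (b :: ins x l)).
        split. destruct Ha; auto. apply H2; auto.
Qed.

Lemma ins_length l x : length (ins x l) = S (length l).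
Proof. induction l; simpl; auto. destruct Rlt_dec; simpl; auto. Qed.

Lemma ins_forall (P : R -> Prop) l x : P x -> Forall P l -> Forall P (ins x l).
Proof.
  intros Hx Hl. induction Hl; simpl. constructor; auto.
  destruct Rlt_dec; constructor; auto.
Qed.

Definition S (x : Rinf) (t : R) := fold_right Rplus 0 (map (fun a => rpow (Rabs a) t) x).
Definition mk (x : Rinf) : list (R*R) :=
  map (fun a => (if Req_EM_T (Rabs a) 0 then 0 else 1, ln (Rabs a))) x.
Definition neg (l : list (R*R)) := map (fun p => (- fst p, snd p)) l.

Lemma S_F x t : S x t = F (mk x) t.
Proof.
  induction x as [|a x IH]; unfold S in *; simpl. reflexivity.
  rewrite IH. unfold rpow, Rpower. destruct Req_EM_T; simpl.
  ring. rewrite Rmult_comm. ring.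
Qed.

Lemma F_neg l t : F (neg l) t = - F l t.
Proof. induction l; simpl. ring. rewrite IHl. ring. Qed.

Lemma F_app l1 l2 t : F (l1 ++ l2) t = F l1 t + F l2 t.
Proof. induction l1; simpl. ring. rewrite IHl1. ring. Qed.

Lemma rpow_ge0 a t : 0 <= rpow a t.
Proof. unfold rpow, Rpower. destruct Req_EM_T. lra. left; apply exp_pos. Qed.

Lemma S_ge0 x t : 0 <= S x t.
Proof.
  induction x; unfold S in *; simpl. lra. pose proof (rpow_ge0 (Rabs a) t). lra.
Qed.


Lemma rpow_inj A B t : 0 < t -> 0 <= A -> 0 <= B -> rpow A (/ t) = rpow B (/ t) -> A = B.
Proof.
  unfold rpow, Rpower. intros Ht HA HB.
  destruct (Req_EM_T A 0); destruct (Req_EM_T B 0); intro H; try congruence.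
  - pose proof (exp_pos (/ t * ln B)); lra.
  - pose proof (exp_pos (/ t * ln A)); lra.
  - apply exp_inv in H.
    assert (ln A = ln B).
    { apply (Rmult_eq_reg_l (/ t)); auto. apply Rgt_not_eq, Rinv_0_lt_compat; auto. }
    apply ln_inv; auto; lra.
Qed.

Lemma pnorm_S x y t : 0 < t -> (pnorm x t = pnorm y t <-> S x t = S y t).
Proof.
  intro Ht. unfold pnorm; change (rpow (S x t) (/ t) = rpow (S y t) (/ t) <-> S x t = S y t). split.
  - apply rpow_inj; auto using S_ge0.
  - intro H; rewrite H; auto.
Qed.

Lemma part1 (x y : Rinf) :
  ~ (forall t, 0 < t -> pnorm x t = pnorm y t) ->
  finite_set (fun t => 0 < t /\ pnorm x t = pnorm y t).
Proof.
  intros Hne. apply NNPP. intro Hnf.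
  set (P := fun t => 0 < t /\ pnorm x t = pnorm y t).
  set (l := mk x ++ neg (mk y)).
  assert (HFl : forall t, F l t = S x t - S y t).
  { intro t. unfold l. rewrite F_app, F_neg, !S_F. ring. }
  assert (Hk : forall k, exists z, inc z /\ length z = k /\ Forall P z).
  { induction k as [|k [z [Hi [Hl Hz]]]].
    - exists nil. simpl. repeat split; constructor.
    - assert (exists t, P t /\ ~ In t z) as [t [Pt Nt]].
      { apply NNPP. intro Hc. apply Hnf. exists z. intros t Pt.
        apply NNPP. intro Hn. apply Hc. exists t. auto. }
      exists (ins t z). repeat split.
      + apply ins_inc_gen; auto.
      + rewrite ins_length; auto.
      + apply ins_forall; auto. }
  destruct (Hk (Datatypes.S (length l))) as [z [Hi [Hl Hz]]].
  apply Hne. intros t Ht. apply pnorm_S; auto.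
  assert (F l t = 0).
  { apply (main_zero l z Hi). lia.
    eapply Forall_impl; [|exact Hz]. intros u [Hu Hp]. rewrite HFl.
    apply pnorm_S in Hp; auto. lra. }
  rewrite HFl in H. lra.
Qed.

Lemma fin_ex {T : Type} (A : list T) (Q : T -> R -> Prop) :
  (forall a, In a A -> finite_set (Q a)) ->
  finite_set (fun s => exists a, In a A /\ Q a s).
Proof.
  induction A as [|a A IH]; intros H.
  - exists nil. intros t [a [[] _]].
  - destruct (H a (or_introl eq_refl)) as [L1 H1].
    destruct IH as [L2 H2]. intros b Hb; apply H; right; auto.
    exists (L1 ++ L2). intros t [b [[<-|Hb] Hq]]; apply in_or_app.
    left; auto. right; apply H2; eauto.
Qed.

Lemma fin_mono (P Q : R -> Prop) : (forall t, P t -> Q t) -> finite_set Q -> finite_set P.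
Proof. intros H [L HL]. exists L; auto. Qed.

Theorem mainTheorem8 :
  (forall x y : Rinf,
     ~ (forall t, 0 < t -> pnorm x t = pnorm y t) ->
     finite_set (fun t => 0 < t /\ pnorm x t = pnorm y t))
  /\
  (forall X : list Rinf,
     finite_set (fun s => 0 < s /\
       exists x y, In x X /\ In y X /\ pnorm x s = pnorm y s /\
                   ~ (forall t, 0 < t -> pnorm x t = pnorm y t))).
Proof.
  split. exact part1.
  intro X.
  apply (fin_mono _ (fun s => exists x, In x X /\ (fun x s => exists y, In y X /\
     (0 < s /\ pnorm x s = pnorm y s /\ ~ (forall t, 0 < t -> pnorm x t = pnorm y t))) x s)).
  { intros s [Hs [x [y [Hx [Hy [He Hn]]]]]]. exists x. split; auto. exists y. auto. }
  apply fin_ex. intros x _.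
  apply (fin_ex X (fun y s => 0 < s /\ pnorm x s = pnorm y s /\ ~ (forall t, 0 < t -> pnorm x t = pnorm y t))).
  intros y _.
  destruct (classic (forall t, 0 < t -> pnorm x t = pnorm y t)) as [Hi|Hn].
  - exists nil. intros t [_ [_ Hc]]. contradiction.
  - apply (fin_mono _ _ (fun t H => conj (proj1 H) (proj1 (proj2 H))) (part1 x y Hn)).
Qed.
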